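(* Let $K:\ell^2\to\mathcal{H}$ be a bounded linear operator into a real Hilbert space $\mathcal{H}$, $f\in\mathcal{H}$, $w=(w_k)$ with $w_k\ge w_0>0$, and $\gamma>0$. The mapping $\mathcal{F}:\ell^2\to\ell^2$, $\mathcal{F}(u)=u-\mathcal{S}_{\gamma w}(u-\gamma K^*(Ku-f))$, is Newton differentiable. With $\mathcal{A}=\mathcal{A}(u)=\{k: |u-\gamma K^*(Ku-f)|_k>\gamma w_k\}$, $\mathcal{I}=\mathcal{I}(u)=\mathbb{N}\setminus\mathcal{A}$, and $K^*K$ split into blocks $\mathcal{M}_{\mathcal{A}\mathcal{A}},\mathcal{M}_{\mathcal{A}\mathcal{I}},\mathcal{M}_{\mathcal{I}\mathcal{A}},\mathcal{M}_{\mathcal{I}\mathcal{I}}$ according to these index sets, a generalized derivative is given by $$\mathcal{G}(u)=\begin{pmatrix}\gamma\mathcal{M}_{\mathcal{A}\mathcal{A}} & \gamma\mathcal{M}_{\mathcal{A}\mathcal{I}}\\ 0 & I_{\mathcal{I}}\end{pmatrix},$$ i.e. $\mathcal{G}(u)=(I-P_{\mathcal{A}})+\gamma P_{\mathcal{A}}K^*K$, where $P_{\mathcal{A}}$ is the coordinate projection onto the indices in $\mathcal{A}$.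
   Context: $K^*$ is the Hilbert space adjoint of $K$; $|x|_k$ means $|x_k|$. For a positive sequence $v$, $\mathcal{S}_v(u)_k=\max\{0,|u_k|-v_k\}\,\mathrm{sgn}(u_k)$, and $\gamma w=(\gamma w_k)$. A mapping $\mathcal{F}:X\to Y$ between Banach spaces is Newton differentiable at $x$ with generalized derivative $\mathcal{G}:X\to L(X,Y)$ if $\lim_{h\to0}\|\mathcal{F}(x+h)-\mathcal{F}(x)-\mathcal{G}(x+h)h\|_Y/\|h\|_X=0$; it is Newton differentiable if this holds at every point. For index sets $\mathcal{B},\mathcal{C}\subset\mathbb{N}$, $\mathcal{M}_{\mathcal{B}\mathcal{C}}=P_{\mathcal{B}}K^*K|_{\ell^2(\mathcal{C})}$, viewed as an operator from sequences supported on $\mathcal{C}$ to sequences supported on $\mathcal{B}$. *)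

(* Defs.v *)
From HB Require Import structures.
From mathcomp Require Import all_boot all_order all_algebra.
From mathcomp Require Import all_classical all_reals all_analysis.
Set Implicit Arguments. Unset Strict Implicit. Unset Printing Implicit Defensive.
Import Order.TTheory GRing.Theory Num.Theory numFieldNormedType.Exports.
Local Open Scope ring_scope.

Section Defs.
Variable R : realType.

Definition seqR := nat -> R.

Definition ell2 (u : seqR) : Prop := cvgn (series (fun k => u k ^+ 2)).

Definition l2ip (u v : seqR) : R := limn (series (fun k => u k * v k)).
Definition l2norm (u : seqR) : R := Num.sqrt (limn (series (fun k => u k ^+ 2))).

Definition sadd (u v : seqR) : seqR := fun k => u k + v k.
Definition ssub (u v : seqR) : seqR := fun k => u k - v k.
Definition sscale (a : R) (u : seqR) : seqR := fun k => a * u k.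

Definition bounded_linear_l2 (T : seqR -> seqR) : Prop :=
  [/\ forall u, ell2 u -> ell2 (T u),
      forall a u v, ell2 u -> ell2 v -> T (sadd (sscale a u) v) = sadd (sscale a (T u)) (T v)
    & exists C : R, forall u, ell2 u -> l2norm (T u) <= C * l2norm u].

Definition newton_differentiable_l2 (F : seqR -> seqR) (G : seqR -> seqR -> seqR) : Prop :=
  [/\ forall u, ell2 u -> ell2 (F u),
      forall u, ell2 u -> bounded_linear_l2 (G u)
    & forall u, ell2 u -> forall eps : R, 0 < eps -> exists2 delta : R, 0 < delta &
        forall h, ell2 h -> 0 < l2norm h < delta ->
          l2norm (ssub (ssub (F (sadd u h)) (F u)) (G (sadd u h) h)) <= eps * l2norm h].

Definition soft_thr (v u : seqR) : seqR :=
  fun k => Num.max 0 (`|u k| - v k) * Num.sg (u k).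

Definition coord_proj (A : nat -> bool) (h : seqR) : seqR :=
  fun k => if A k then h k else 0.
End Defs.

Section Hilbert.
Variables (R : realType) (H : completeNormedModType R).

(** [ip] is an inner product on H inducing its norm (so H is a real Hilbert space). *)
Definition is_inner_product (ip : H -> H -> R) : Prop :=
  [/\ forall x y, ip x y = ip y x,
      forall a x y z, ip (a *: x + y) z = a * ip x z + ip y z
    & forall x, ip x x = `|x| ^+ 2].

Definition bounded_linear_to (K : seqR R -> H) : Prop :=
  (forall a u v, ell2 u -> ell2 v -> K (sadd (sscale a u) v) = a *: K u + K v) /\
  exists C : R, forall u, ell2 u -> `|K u| <= C * l2norm u.

Definition is_adjoint (ip : H -> H -> R) (K : seqR R -> H) (Kadj : H -> seqR R) : Prop :=
  (forall h, ell2 (Kadj h)) /\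
  forall u h, ell2 u -> ip (K u) h = l2ip u (Kadj h).

Definition ssn_F (K : seqR R -> H) (Kadj : H -> seqR R) (f : H) (w : seqR R) (gamma : R)
  (u : seqR R) : seqR R :=
  ssub u (soft_thr (sscale gamma w) (ssub u (sscale gamma (Kadj (K u - f))))).

Definition active_set (K : seqR R -> H) (Kadj : H -> seqR R) (f : H) (w : seqR R) (gamma : R)
  (u : seqR R) : nat -> bool :=
  fun k => gamma * w k < `|u k - gamma * Kadj (K u - f) k|.

Definition ssn_G (K : seqR R -> H) (Kadj : H -> seqR R) (f : H) (w : seqR R) (gamma : R)
  (u : seqR R) (h : seqR R) : seqR R :=
  let A := active_set K Kadj f w gamma u in
  sadd (ssub h (coord_proj A h)) (sscale gamma (coord_proj A (Kadj (K h)))).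
End Hilbert.

(* Main.v *)
Require Import Defs.
From HB Require Import structures.
From mathcomp Require Import all_boot all_order all_algebra.
From mathcomp Require Import all_classical all_reals all_analysis.
From mathcomp Require Import ring lra.
Import Order.TTheory GRing.Theory Num.Theory numFieldNormedType.Exports.
Set Implicit Arguments. Unset Strict Implicit.
Local Open Scope classical_set_scope.
Local Open Scope ring_scope.



Lemma series_nondec (R : realType) (a : R^nat) : (forall k, 0 <= a k) ->
  {homo series a : n m / (n <= m)%N >-> n <= m}.
Proof.
move=> a0 n m; elim: m => [|m IH]; first by rewrite leqn0 => /eqP ->.
rewrite leq_eqVlt => /orP[/eqP -> //|]; rewrite ltnS => /IH h.
by rewrite seriesSr; apply: (le_trans h); rewrite lerDl.
Qed.

Lemma term_le_lim (R : realType) (a : R^nat) : (forall k, 0 <= a k) ->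
  cvgn (series a) -> forall k, a k <= limn (series a).
Proof.
move=> a0 ca k; have := nondecreasing_cvgn_le (@series_nondec R a a0) ca k.+1.
apply: le_trans.
rewrite seriesS lerDl; have := @series_nondec R a a0 0 k (leq0n k); apply: le_trans.
by rewrite /series /= big_geq.
Qed.

Lemma lim_le_bound (R : realType) (a : R^nat) (B : R) :
  cvgn (series a) -> (forall n, series a n <= B) -> limn (series a) <= B.
Proof. by move=> ca hB; apply: limr_le => //; apply: nearW. Qed.

Lemma lim_ev_cst (R : realType) (s : R^nat) n c :
  (forall m, (n <= m)%N -> s m = c) -> cvgn s /\ limn s = c.
Proof.
move=> hs; have hc : s @ \oo --> c.
  by apply: cvg_near_cst; exists n => // m /= hm; exact: hs.
split; first by apply/cvg_ex; exists c.
exact: cvg_lim.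
Qed.

Lemma series_ev0 (R : realType) (a : R^nat) n :
  (forall j, (n <= j)%N -> a j = 0) -> forall m, (n <= m)%N -> series a m = series a n.
Proof.
move=> a0; elim => [|m IH]; first by rewrite leqn0 => /eqP ->.
rewrite leq_eqVlt => /orP[/eqP -> //|]; rewrite ltnS => h.
by rewrite seriesSr IH // a0 // addr0.
Qed.

Lemma lim_ev0 (R : realType) (a : R^nat) n :
  (forall j, (n <= j)%N -> a j = 0) -> cvgn (series a) /\ limn (series a) = series a n.
Proof. by move=> a0; apply: lim_ev_cst; exact: series_ev0. Qed.

Lemma ell2_le (R : realType) (u v : seqR R) :
  (forall k, u k ^+ 2 <= v k ^+ 2) -> ell2 v -> ell2 u.
Proof. by move=> h; apply: series_le_cvg => // k; exact: sqr_ge0. Qed.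

Lemma ell2_le2 (R : realType) (u v1 v2 : seqR R) (c : R) :
  (forall k, u k ^+ 2 <= c * (v1 k ^+ 2 + v2 k ^+ 2)) -> ell2 v1 -> ell2 v2 -> ell2 u.
Proof.
move=> h e1 e2.
have hc : cvgn (series (c *: ((fun k => v1 k ^+ 2) + (fun k => v2 k ^+ 2)))).
  by apply: is_cvg_seriesZ; apply: is_cvg_seriesD.
apply: series_le_cvg hc => k; first exact: sqr_ge0.
  by apply: le_trans (h k); exact: sqr_ge0.
exact: h.
Qed.

Lemma ell2_add (R : realType) (u v : seqR R) : ell2 u -> ell2 v -> ell2 (sadd u v).
Proof.
apply: (@ell2_le2 R _ _ _ 2) => k; rewrite /sadd.
set a := u k; set b := v k; have := sqr_ge0 (a - b); rewrite !expr2; nra.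
Qed.

Lemma ell2_sub (R : realType) (u v : seqR R) : ell2 u -> ell2 v -> ell2 (ssub u v).
Proof.
apply: (@ell2_le2 R _ _ _ 2) => k; rewrite /ssub.
set a := u k; set b := v k; have := sqr_ge0 (a + b); rewrite !expr2; nra.
Qed.

Lemma ell2_scale (R : realType) (u : seqR R) a : ell2 u -> ell2 (sscale a u).
Proof.
move=> e; apply: (@ell2_le2 R _ u (fun _ => 0) (a ^+ 2)) => //.
  by move=> k; rewrite /sscale expr0n /= addr0 exprMn.
by apply/cvg_ex; exists 0; apply: cvg_near_cst; apply: nearW => n;
  rewrite /series /= big1 // => i _; rewrite expr0n.
Qed.

Lemma ell2_proj (R : realType) (u : seqR R) A : ell2 u -> ell2 (coord_proj A u).
Proof.
apply: ell2_le => k; rewrite /coord_proj; case: (A k) => //.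
by rewrite expr0n /= sqr_ge0.
Qed.



Definition edelta (R : realType) (k : nat) : seqR R := fun j => if j == k then 1 else 0.

Lemma series_delta (R : realType) k (v : seqR R) n :
  series (fun j => edelta R k j * v j) n = if (k < n)%N then v k else 0.
Proof.
elim: n => [|n IH]; first by rewrite /series /= big_geq.
rewrite seriesSr IH /edelta; case: (ltngtP k n) => h.
- by rewrite ltnS ltnW // mul0r addr0.
- by rewrite ltnS leqNgt h mul0r addr0.
- by rewrite h ltnSn mul1r add0r.
Qed.

Lemma ell2_delta (R : realType) k : ell2 (edelta R k).
Proof.
have [] := @lim_ev_cst R (series (fun j => edelta R k j ^+ 2)) k.+1 1 => // m hm.
have -> : (fun j => edelta R k j ^+ 2) = (fun j => edelta R k j * edelta R k j).
  by apply: funext => j; rewrite expr2.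
by rewrite series_delta hm /edelta eqxx.
Qed.

Lemma l2ip_delta (R : realType) k (v : seqR R) : l2ip (edelta R k) v = v k.
Proof.
have [] := @lim_ev_cst R (series (fun j => edelta R k j * v j)) k.+1 (v k) => //.
by move=> m hm; rewrite series_delta hm.
Qed.

Section IP.
End IP.

Lemma ip0l (R : realType) (H : completeNormedModType R) (ip : H -> H -> R) :
  is_inner_product ip -> forall z, ip 0 z = 0.
Proof.
case=> _ hl _ z; have := hl 1 0 0 z; rewrite scaler0 addr0 mul1r => /eqP.
by rewrite -subr_eq subrr eq_sym => /eqP.
Qed.

Lemma ipDl (R : realType) (H : completeNormedModType R) (ip : H -> H -> R) :
  is_inner_product ip -> forall x y z, ip (x + y) z = ip x z + ip y z.
Proof. by case=> _ hl _ x y z; rewrite -[x]scale1r hl mul1r scale1r. Qed.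

Lemma ipZl (R : realType) (H : completeNormedModType R) (ip : H -> H -> R) :
  is_inner_product ip -> forall a x z, ip (a *: x) z = a * ip x z.
Proof.
move=> hip a x z; have := ip0l hip z; case: hip => _ hl _.
by move=> h0; rewrite -[a *: x]addr0 hl h0 addr0.
Qed.

Lemma ipNl (R : realType) (H : completeNormedModType R) (ip : H -> H -> R) :
  is_inner_product ip -> forall x z, ip (- x) z = - ip x z.
Proof. by move=> hip x z; rewrite -scaleN1r (ipZl hip) mulN1r. Qed.

Lemma ipDr (R : realType) (H : completeNormedModType R) (ip : H -> H -> R) :
  is_inner_product ip -> forall x y z, ip z (x + y) = ip z x + ip z y.
Proof. by move=> hip x y z; case: (hip) => hs _ _; rewrite hs (ipDl hip) !(hs z). Qed.

Lemma ipZr (R : realType) (H : completeNormedModType R) (ip : H -> H -> R) :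
  is_inner_product ip -> forall a x z, ip z (a *: x) = a * ip z x.
Proof. by move=> hip a x z; case: (hip) => hs _ _; rewrite hs (ipZl hip) (hs z). Qed.

Lemma ipNr (R : realType) (H : completeNormedModType R) (ip : H -> H -> R) :
  is_inner_product ip -> forall x z, ip z (- x) = - ip z x.
Proof. by move=> hip x z; case: (hip) => hs _ _; rewrite hs (ipNl hip) (hs z). Qed.

Lemma ip_cs (R : realType) (H : completeNormedModType R) (ip : H -> H -> R) :
  is_inner_product ip -> forall x y, ip x y <= `|x| * `|y|.
Proof.
move=> hip x y; case: (hip) => hs _ hn.
have e1 : `|x + y| ^+ 2 = `|x| ^+ 2 + 2 * ip x y + `|y| ^+ 2.
  rewrite -hn (ipDl hip) !(ipDr hip) -!hn (hs y x); lra.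
have e2 : `|x - y| ^+ 2 = `|x| ^+ 2 - 2 * ip x y + `|y| ^+ 2.
  rewrite -hn (ipDl hip) !(ipDr hip) !(ipNl hip) !(ipNr hip) -!hn opprK (hs y x); lra.
have n1 : `|x + y| <= `|x| + `|y| by apply: ler_normD.
have n2 := ler_dist_dist x y.
have n3 : (`|x| - `|y|) ^+ 2 <= `|x - y| ^+ 2.
  rewrite -[(`|x| - `|y|) ^+ 2]real_normK ?realB //.
  by apply: lerXn2r => //; rewrite nnegrE.
have n4 : `|x + y| ^+ 2 <= (`|x| + `|y|) ^+ 2.
  by apply: lerXn2r => //; rewrite nnegrE ?addr_ge0.
move: n3 n4; rewrite e1 e2 !expr2 => n3 n4; nra.
Qed.



Lemma abs_le_of_sq (R : realType) (a b : R) : a ^+ 2 <= b ^+ 2 -> 0 <= b -> `|a| <= b.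
Proof.
rewrite -(real_normK (num_real a)) => h hb.
have ha := normr_ge0 a; move: h; rewrite !expr2 => h; nra.
Qed.

Lemma sq_le_of_abs (R : realType) (a b : R) : `|a| <= b -> a ^+ 2 <= b ^+ 2.
Proof.
rewrite -(real_normK (num_real a)) => h; have ha := normr_ge0 a.
rewrite !expr2; nra.
Qed.

Definition soft (R : realType) (t x : R) := Num.max 0 (`|x| - t) * Num.sg x.

Lemma soft_val (R : realType) (t x : R) :
  soft t x = if t < `|x| then x - t * Num.sg x else 0.
Proof.
rewrite /soft; case: ltP => h.
  rewrite max_r; last by rewrite subr_ge0 ltW.
  by rewrite mulrBl mulrC -numEsg.
by rewrite max_l ?mul0r // subr_le0.
Qed.

Lemma soft_abs (R : realType) (t x : R) : 0 <= t -> `|soft t x| <= `|x|.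
Proof.
move=> t0; rewrite /soft normrM normr_sg.
case: (x =P 0) => [->|_]; first by rewrite mulr0 normr0.
rewrite mulr1 ger0_norm ?le_max ?lexx //.
by rewrite ge_max normr_ge0 lerBlDr lerDl t0.
Qed.

Lemma sg_add (R : realType) (x d : R) : `|d| < `|x| -> Num.sg (x + d) = Num.sg x.
Proof.
move=> h; have h1 := ler_norm d; have h2 := ler_norm (- d); rewrite normrN in h2.
case: (ltgtP x 0) => hx.
- rewrite (ltr0_norm hx) in h; rewrite (ltr0_sg hx) ltr0_sg //; lra.
- rewrite (gtr0_norm hx) in h; rewrite (gtr0_sg hx) gtr0_sg //; lra.
- by move: h; rewrite hx normr0 ltNge normr_ge0.
Qed.

Lemma soft_rem (R : realType) (t x d : R) : 0 < t ->
  `|d| < (if `|x| == t then t else `|(`|x| - t)|) ->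
  soft t (x + d) - soft t x - (if t < `|x + d| then d else 0) = 0.
Proof.
move=> t0 hd; rewrite !soft_val.
have n1 := ler_normD x d.
have n2 := ler_normD (x + d) (- d); rewrite addrK normrN in n2.
case: eqP hd => hx hd.
- have -> : (t < `|x|) = false by rewrite hx ltxx.
  case: ltP => _; last by rewrite !subr0.
  rewrite sg_add ?hx //; rewrite {1}[x]numEsg hx; lra.
- case: (ltgtP t `|x|) => htx; last by case: hx.
  + have e : `|(`|x| - t)| = `|x| - t by rewrite gtr0_norm // subr_gt0.
    rewrite e in hd.
    have -> : t < `|x + d| by lra.
    rewrite sg_add; last by lra.
    lra.
  + have e : `|(`|x| - t)| = - (`|x| - t) by rewrite ltr0_norm // subr_lt0.
    rewrite e in hd.
    have -> : (t < `|x + d|) = false by apply/negbTE; rewrite -leNgt; lra.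
    by rewrite !subr0.
Qed.



Lemma l2norm_ge0 (R : realType) (u : seqR R) : 0 <= l2norm u.
Proof. exact: sqrtr_ge0. Qed.

Lemma lim_ge0 (R : realType) (a : R^nat) : (forall k, 0 <= a k) ->
  cvgn (series a) -> 0 <= limn (series a).
Proof. by move=> a0 ca; have := term_le_lim a0 ca 0; apply: le_trans. Qed.

Lemma l2norm_coord (R : realType) (h : seqR R) : ell2 h -> forall k, `|h k| <= l2norm h.
Proof.
move=> e k; apply: abs_le_of_sq; last exact: sqrtr_ge0.
have a0 : forall k, 0 <= h k ^+ 2 by move=> j; exact: sqr_ge0.
rewrite /l2norm sqr_sqrtr; last exact: lim_ge0.
exact: (term_le_lim a0).
Qed.

Lemma l2norm0 (R : realType) : l2norm (fun _ : nat => (0 : R)) = 0.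
Proof.
have h0 : forall j, (0 <= j)%N -> (fun _ : nat => (0:R) ^+ 2) j = 0.
  by move=> j _; rewrite expr0n.
rewrite /l2norm; have [_ ->] := @lim_ev0 R (fun _ : nat => (0:R) ^+ 2) 0%N h0.
by rewrite /series /= big_geq // sqrtr0.
Qed.

Lemma K_add (R : realType) (H : completeNormedModType R) (K : seqR R -> H) :
  bounded_linear_to K -> forall u h, ell2 u -> ell2 h -> K (sadd u h) = K u + K h.
Proof.
case=> hl _ u h eu eh; have := hl 1 u h eu eh.
have -> : sscale 1 u = u by apply: funext => k; rewrite /sscale mul1r.
by rewrite scale1r.
Qed.

Lemma Kadj_coord (R : realType) (H : completeNormedModType R) (ip : H -> H -> R)
  (K : seqR R -> H) (Kadj : H -> seqR R) :
  is_adjoint ip K Kadj -> forall y k, Kadj y k = ip (K (edelta R k)) y.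
Proof. by case=> _ ha y k; rewrite ha ?l2ip_delta //; exact: ell2_delta. Qed.

Lemma K_bounds (R : realType) (H : completeNormedModType R) (ip : H -> H -> R)
  (K : seqR R -> H) (Kadj : H -> seqR R) :
  is_inner_product ip -> bounded_linear_to K -> is_adjoint ip K Kadj ->
  exists c : R, [/\ 0 <= c,
    (forall h, ell2 h -> `|K h| <= c * l2norm h) &
    (forall y, limn (series (fun k => Kadj y k ^+ 2)) <= (c * `|y|) ^+ 2)].
Proof.
move=> hip hK hadj; case: (hK) => _ [C hC].
have hKc : forall h, ell2 h -> `|K h| <= `|C| * l2norm h.
  move=> h eh; apply: le_trans (hC h eh) _.
  by apply: ler_wpM2r; [exact: l2norm_ge0 | exact: ler_norm].
exists `|C|; split => // y; case: (hadj) => hae ha.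
set v := Kadj y; apply: lim_le_bound; first exact: hae.
move=> n; set S := series (fun k => v k ^+ 2) n.
pose un := fun j => if (j < n)%N then v j else 0.
have eun : ell2 un.
  apply: (@ell2_le R un v) => [j|]; last exact: hae.
  by rewrite /un; case: ifP => // _; rewrite expr0n /= sqr_ge0.
have S0 : 0 <= S by rewrite /S /series /=; apply: sumr_ge0 => j _; exact: sqr_ge0.
have h0 : forall j, (n <= j)%N -> un j * v j = 0.
  by move=> j hj; rewrite /un ltnNge hj mul0r.
have h0' : forall j, (n <= j)%N -> un j ^+ 2 = 0.
  by move=> j hj; rewrite /un ltnNge hj expr0n.
have e1 : l2ip un v = S.
  rewrite /l2ip; have [_ ->] := @lim_ev0 R (fun j => un j * v j) n h0.
  by rewrite /S /series /=; apply: eq_big_nat => j /andP[_ hj]; rewrite /un hj expr2.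
have e2 : l2norm un = Num.sqrt S.
  rewrite /l2norm; have [_ ->] := @lim_ev0 R (fun j => un j ^+ 2) n h0'.
  by congr Num.sqrt; rewrite /S /series /=; apply: eq_big_nat => j /andP[_ hj]; rewrite /un hj.
have hS := ha un y eun; rewrite e1 in hS.
have hcs := ip_cs hip (K un) y.
have hKu := hKc un eun; rewrite e2 in hKu.
have sS : S = Num.sqrt S ^+ 2 by rewrite sqr_sqrtr.
rewrite hS in hcs; move: hcs hKu; rewrite sS.
have := sqrtr_ge0 S; have := normr_ge0 C; have := normr_ge0 y; have := normr_ge0 (K un).
set s := Num.sqrt S; set c := `|C|; set ny := `|y|; set nk := `|K un|.
move=> h1 h2 h3 h4 h5 h6.
rewrite sqrtr_sqr (ger0_norm h4) in h6.
have h6' : nk * ny <= c * s * ny by apply: ler_wpM2r.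
have h7 : s * s <= c * s * ny by rewrite expr2 in h5; lra.
have h8 : s <= c * ny.
  case: (leP s (c * ny)) => // hlt.
  have cn0 : 0 <= c * ny by apply: mulr_ge0.
  have pos : 0 < s - c * ny by lra.
  have spos : 0 < s by lra.
  have := mulr_gt0 pos spos; lra.
rewrite !expr2; nra.
Qed.



Lemma finite_delta (R : realType) (rho : nat -> R) N : (forall k, 0 < rho k) ->
  exists2 d : R, 0 < d & forall k, (k < N)%N -> d <= rho k.
Proof.
move=> rp; elim: N => [|N [d d0 hd]]; first by exists 1.
exists (Num.min d (rho N)); first by rewrite lt_min d0 rp.
move=> k; rewrite ltnS leq_eqVlt => /orP[/eqP ->|hk]; rewrite ge_min.
  by rewrite lexx orbT.
by rewrite hd.
Qed.

Theorem proposition3p7 (R : realType) (H : completeNormedModType R)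
  (ip : H -> H -> R) (K : seqR R -> H) (Kadj : H -> seqR R) (f : H)
  (w : seqR R) (w0 gamma : R) :
  is_inner_product ip ->
  bounded_linear_to K ->
  is_adjoint ip K Kadj ->
  0 < w0 -> (forall k, w0 <= w k) ->
  0 < gamma ->
  newton_differentiable_l2 (ssn_F K Kadj f w gamma) (ssn_G K Kadj f w gamma).
Proof.
move=> hip hK hadj w00 hw g0.
have [c [c0 hKc hKadj]] := K_bounds hip hK hadj.
have hae : forall y, ell2 (Kadj y) by case: hadj.
have Kco := Kadj_coord hadj.
have coordb : forall y k, `|Kadj y k| <= c * `|y|.
  move=> y k; apply: abs_le_of_sq; last by apply: mulr_ge0.
  apply: le_trans (hKadj y); apply: (@term_le_lim R (fun j => Kadj y j ^+ 2)); last exact: hae.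
  by move=> j; exact: sqr_ge0.
pose gv (u : seqR R) := ssub u (sscale gamma (Kadj (K u - f))).
have egv : forall u, ell2 u -> ell2 (gv u).
  by move=> u eu; apply: ell2_sub eu _; apply: ell2_scale.
have tpos : forall k, 0 < gamma * w k.
  by move=> k; apply: mulr_gt0 => //; apply: lt_le_trans (hw k).
have eG : forall u h, ell2 h -> ell2 (ssn_G K Kadj f w gamma u h).
  move=> u h eh; rewrite /ssn_G /=; apply: ell2_add; first by apply: ell2_sub => //; apply: ell2_proj.
  by apply: ell2_scale; apply: ell2_proj.
split.
- move=> u eu; rewrite /ssn_F; apply: ell2_sub => //; apply: (@ell2_le R _ (gv u)); last exact: egv.
  move=> k; rewrite -(real_normK (num_real (gv u k))); apply: sq_le_of_abs.
  exact: (@soft_abs R (gamma * w k) (gv u k) (ltW (tpos k))).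
- move=> u eu; split.
  + move=> h eh; exact: eG.
  + move=> a x y ex ey; apply: funext => k.
    rewrite /ssn_G /= (proj1 hK a x y ex ey) /sadd /ssub /sscale /coord_proj.
    by rewrite !Kco (ipDr hip) (ipZr hip); case: ifP => _; ring.
  + exists (Num.sqrt (1 + gamma ^+ 2 * (c * c) ^+ 2)) => h eh.
    set Gh := ssn_G K Kadj f w gamma u h.
    set g := Kadj (K h).
    have eGh : ell2 Gh by exact: eG.
    set Lh := limn (series (fun k => h k ^+ 2)).
    set Lg := limn (series (fun k => g k ^+ 2)).
    have h2 : forall k, 0 <= h k ^+ 2 by move=> k; exact: sqr_ge0.
    have g2 : forall k, 0 <= g k ^+ 2 by move=> k; exact: sqr_ge0.
    have Lh0 : 0 <= Lh by exact: lim_ge0.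
    have hterm : forall k, Gh k ^+ 2 <= h k ^+ 2 + gamma ^+ 2 * g k ^+ 2.
      move=> k; rewrite /Gh /ssn_G /= /sadd /ssub /sscale /coord_proj -/g.
      have := h2 k; have := g2 k; case: ifP => _; rewrite !expr2 => ? ?; nra.
    have LGh : limn (series (fun k => Gh k ^+ 2)) <= Lh + gamma ^+ 2 * Lg.
      apply: lim_le_bound; first exact: eGh.
      move=> n.
      have s1 : series (fun k => Gh k ^+ 2) n <=
                series (fun k => h k ^+ 2 + gamma ^+ 2 * g k ^+ 2) n.
        by rewrite /series /=; apply: ler_sum => k _; exact: hterm.
      apply: le_trans s1 _.
      have -> : series (fun k => h k ^+ 2 + gamma ^+ 2 * g k ^+ 2) n =
          series (fun k => h k ^+ 2) n + gamma ^+ 2 * series (fun k => g k ^+ 2) n.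
        by rewrite /series /= big_split /= -mulr_sumr.
      apply: lerD; first exact: (nondecreasing_cvgn_le (series_nondec h2) eh n).
      apply: ler_wpM2l; first exact: sqr_ge0.
      exact: (nondecreasing_cvgn_le (series_nondec g2) (hae _) n).
    have hKh := hKc h eh.
    have Lg_le : Lg <= (c * (c * l2norm h)) ^+ 2.
      apply: le_trans (hKadj (K h)) _.
      apply: sq_le_of_abs; rewrite ger0_norm ?mulr_ge0 //.
      exact: ler_wpM2l.
    have el : l2norm h ^+ 2 = Lh by rewrite /l2norm sqr_sqrtr.
    have Lg_le' : Lg <= (c * c) ^+ 2 * Lh.
      by rewrite -el; move: Lg_le; congr (_ <= _); ring.
    have M0 : 0 <= 1 + gamma ^+ 2 * (c * c) ^+ 2.
      by apply: addr_ge0 => //; apply: mulr_ge0; exact: sqr_ge0.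
    change (Num.sqrt (limn (series (fun k => Gh k ^+ 2))) <=
      Num.sqrt (1 + gamma ^+ 2 * (c * c) ^+ 2) * Num.sqrt Lh).
    rewrite -sqrtrM // ler_sqrt; last by apply: mulr_ge0.
    apply: le_trans LGh _.
    have gg : 0 <= gamma ^+ 2 by exact: sqr_ge0.
    have := ler_wpM2l gg Lg_le'; lra.
- move=> u eu eps e0.
  pose v := gv u.
  have ev : ell2 v by exact: egv.
  have v0 : (fun k => v k ^+ 2) @ \oo --> 0 := cvg_series_cvg_0 ev.
  have tw : 0 < gamma * w0 / 2 by apply: divr_gt0 => //; apply: mulr_gt0.
  have half : gamma * w0 = gamma * w0 / 2 + gamma * w0 / 2 by rewrite -splitr.
  have [N _ hN] := cvgr0_norm_lt _ v0 _ (mulr_gt0 tw tw).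
  have vsmall : forall k, (N <= k)%N -> `|v k| < gamma * w0 / 2.
    move=> k hk; have := hN k hk; rewrite /= normrX => hv.
    have := normr_ge0 (v k); move: hv; rewrite !expr2 => hv hv0; nra.
  pose rho k := if `|v k| == gamma * w k then gamma * w k else `|(`|v k| - gamma * w k)|.
  have rpos : forall k, 0 < rho k.
    move=> k; rewrite /rho; case: eqP => [_|hne]; first exact: tpos.
    by rewrite normr_gt0 subr_eq0; apply/eqP.
  have [d1 d10 hd1] := @finite_delta R rho N rpos.
  pose d' := Num.min d1 (gamma * w0 / 2).
  have d'0 : 0 < d' by rewrite lt_min d10 tw.
  pose M := 1 + gamma * (c * c).
  have M0 : 0 < M by rewrite /M; have := mulr_ge0 (ltW g0) (mulr_ge0 c0 c0); lra.
  exists (d' / M); first exact: divr_gt0.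
  move=> h eh /andP[hp hl]; rewrite ltr_pdivlMr // in hl.
  pose dv k := h k - gamma * Kadj (K h) k.
  have hdv : forall k, `|dv k| < rho k.
    move=> k.
    have b0 : `|Kadj (K h) k| <= c * (c * l2norm h).
      by apply: le_trans (coordb _ _) _; apply: ler_wpM2l => //; exact: hKc.
    have b1 : `|dv k| <= l2norm h * M.
      apply: le_trans (ler_normB _ _) _; rewrite normrM (gtr0_norm g0).
      have := l2norm_coord eh k; have := ler_wpM2l (ltW g0) b0; rewrite /M.
      move=> p q; have -> : l2norm h * (1 + gamma * (c * c)) =
        l2norm h + gamma * (c * (c * l2norm h)) by ring.
      lra.
    have b2 : `|dv k| < d' by apply: le_lt_trans b1 hl.
    case: (ltnP k N) => hk.
      apply: lt_le_trans b2 _; apply: le_trans (hd1 k hk); rewrite /d' ge_min lexx //.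
    have hv := vsmall k hk.
    have ww : gamma * w0 <= gamma * w k by apply: ler_wpM2l; [exact: ltW | exact: hw].
    rewrite /rho.
    have -> : (`|v k| == gamma * w k) = false.
      by apply/negbTE; apply/eqP => e; move: hv; rewrite e; lra.
    have e : `|(`|v k| - gamma * w k)| = gamma * w k - `|v k|.
      by rewrite ltr0_norm ?opprB // subr_lt0; lra.
    rewrite e.
    have : d' <= gamma * w0 / 2 by rewrite /d' ge_min lexx orbT.
    lra.
  have key : forall k, gv (sadd u h) k = v k + dv k.
    move=> k; rewrite /v /gv /ssub /sscale /sadd (K_add hK eu eh) /dv !Kco.
    have -> : K u + K h - f = (K u - f) + K h by rewrite addrAC.
    rewrite (ipDr hip); ring.
  have rem0 : ssub (ssub (ssn_F K Kadj f w gamma (sadd u h)) (ssn_F K Kadj f w gamma u))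
      (ssn_G K Kadj f w gamma (sadd u h) h) = fun _ => 0.
    apply: funext => k.
    have eF1 : ssn_F K Kadj f w gamma (sadd u h) k =
      (u k + h k) - soft (gamma * w k) (gv (sadd u h) k) by [].
    have eF2 : ssn_F K Kadj f w gamma u k = u k - soft (gamma * w k) (v k) by [].
    have eG1 : ssn_G K Kadj f w gamma (sadd u h) h k =
      (h k - (if gamma * w k < `|gv (sadd u h) k| then h k else 0)) +
      gamma * (if gamma * w k < `|gv (sadd u h) k| then Kadj (K h) k else 0) by [].
    rewrite /ssub /= eF1 eF2 eG1 key.
    have := soft_rem (tpos k) (hdv k).
    by rewrite /dv; case: ifP => _; lra.
  by rewrite rem0 l2norm0; apply: mulr_ge0 (ltW e0) (l2norm_ge0 _).
Qed.
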